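(* Let $\{x^k\}$ be generated by the Deterministic Asynchronous PALM algorithm and assume (A3). Then for every $k\in\mathbb N$, $$\Phi(z^{k+1})+\frac12\Big(\frac1{\gamma^k_{j_k}}-L_{j_k}(x^k_{-j_k})-2M\sqrt{\rho_\tau\tau}\Big)\|x^{k+1}_{j_k}-x^k_{j_k}\|^2\le\Phi(z^k).$$ In particular $\Psi(x^k)\le\Phi(z^k)$ and $\Phi(z^0)=\Psi(x^0)$.
   Context: Let $\mathcal H=\mathcal H_1\times\cdots\times\mathcal H_m$ be a product of finite-dimensional real Euclidean spaces with $\langle x,y\rangle=\sum_j\langle x_j,y_j\rangle$. For $x\in\mathcal H$, $x_{-j}$ denotes $x$ with its $j$th block removed and $(x_{-j};y)$ the point with $j$th block replaced by $y\in\mathcal H_j$. Let $f:\mathcal H\to\mathbb R$ be $C^1$, $r_j:\mathcal H_j\to(-\infty,\infty]$ proper lower semicontinuous, $r(x)=\sum_jr_j(x_j)$, $\Psi=f+r$ bounded below. $r$ is prox-bounded: there is $\lambda_r>0$ with $\operatorname{argmin}_y\{r(y)+\frac1{2\lambda}\|x-y\|^2\}\ne\emptyset$ for all $x$ and $0<\lambda\le\lambda_r$. For each $j$ there is $L_j:\mathcal H_{-j}\to(0,\infty)$ such that $y\mapsto\nabla_jf(x_{-j};y)$ is $L_j(x_{-j})$-Lipschitz for every $x$. Delays: an integer $\tau\ge1$ and $d_k\in\{0,\dots,\tau\}^m$; $x^{k-d_k}:=(x_1^{k-d_{k,1}},\dots,x_m^{k-d_{k,m}})$, with $x^i_j=x^0_j$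 for $i\le0$. Deterministic Asynchronous PALM: choose $x^0$, $c\in(0,1)$, $M>0$, indices $j_k\in\{1,\dots,m\}$; let $\rho_\tau:=\sup_{j,k}|\{h:k-\tau\le h\le k,\ j_h=j\}|$. For each $k$ set $\gamma^k_j=\min\{c(L_j(x^{k-d_k}_{-j})+2M\sqrt{\rho_\tau\tau})^{-1},\lambda_r\}$, choose $x^{k+1}_{j_k}\in\operatorname{argmin}_{u\in\mathcal H_{j_k}}\{r_{j_k}(u)+\langle\nabla_{j_k}f(x^{k-d_k}),u-x^k_{j_k}\rangle+\frac1{2\gamma^k_{j_k}}\|u-x^k_{j_k}\|^2\}$, and $x^{k+1}_j=x^k_j$ for $j\ne j_k$. (A3): $\|\nabla_{j_k}f(x^k)-\nabla_{j_k}f(x^{k-d_k})\|\le M\|x^k-x^{k-d_k}\|$ for all $k$. Lyapunov function $\Phi:\mathcal H^{1+\tau}\to(-\infty,\infty]$: $\Phi(x(0),\dots,x(\tau))=f(x(0))+r(x(0))+\frac{M\sqrt{\rho_\tau}}{2\sqrt\tau}\sum_{h=1}^\tau(\tau-h+1)\|x(h)-x(h-1)\|^2$, and $z^k:=(x^k,x^{k-1},\dots,x^{k-\tau})$ with $x^i:=x^0$ for $i<0$. *)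

(* Defs.v *)
From mathcomp Require Import all_boot.
From Stdlib Require Import Reals.
Set Implicit Arguments. Unset Strict Implicit. Unset Printing Implicit Defensive.
Open Scope R_scope.

Definition vec (d : nat) := 'I_d -> R.
Definition vsub (d : nat) (u v : vec d) : vec d := fun i => u i - v i.
Definition vinner (d : nat) (u v : vec d) : R := \big[Rplus/R0]_(i < d) (u i * v i).
Definition vnorm (d : nat) (u : vec d) : R := sqrt (vinner u u).

Definition prodsp (m : nat) (n : 'I_m -> nat) := forall j : 'I_m, vec (n j).
Arguments prodsp : clear implicits.
Definition hadd m n (x y : prodsp m n) : prodsp m n := fun j i => x j i + y j i.
Definition hsub m n (x y : prodsp m n) : prodsp m n := fun j i => x j i - y j i.
Definition hinner m n (x y : prodsp m n) : R :=
  \big[Rplus/R0]_(j < m) vinner (x j) (y j).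
Definition hnorm m n (x : prodsp m n) : R := sqrt (hinner x x).

(** (x_{-j}; y): replace block j of x by y. *)
Definition upd m n (x : prodsp m n) (j : 'I_m) (y : vec (n j)) : prodsp m n :=
  fun j' => match j =P j' with
            | ReflectT e => eq_rect j (fun t => vec (n t)) y j' e
            | ReflectF _ => x j'
            end.

Arguments upd {m n} x j y.

(** Extended reals (-oo excluded): None stands for +oo. *)
Definition ereal := option R.
Definition eadd (a b : ereal) : ereal :=
  match a, b with Some x, Some y => Some (x + y) | _, _ => None end.
Definition ele (a b : ereal) : Prop :=
  match a, b with
  | _, None => True
  | None, Some _ => False
  | Some x, Some y => x <= y
  end.
Definition elt_r (a : R) (b : ereal) : Prop :=
  match b with None => True | Some y => a < y end.

Definition proper_e d (g : vec d -> ereal) : Prop := exists u, g u <> None.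
Definition lsc_e d (g : vec d -> ereal) : Prop :=
  forall u a, elt_r a (g u) ->
  exists delta, 0 < delta /\ forall v, vnorm (vsub v u) < delta -> elt_r a (g v).

Definition rsum m n (r : forall j : 'I_m, vec (n j) -> ereal) (x : prodsp m n) : ereal :=
  \big[eadd/Some R0]_(j < m) r j (x j).
Definition Psi m n (f : prodsp m n -> R) r (x : prodsp m n) : ereal :=
  eadd (Some (f x)) (rsum r x).

Definition has_gradient m n (f : prodsp m n -> R) (gradf : prodsp m n -> prodsp m n) :=
  forall x eps, 0 < eps -> exists delta, 0 < delta /\
    forall h, hnorm h < delta ->
      Rabs (f (hadd x h) - f x - hinner (gradf x) h) <= eps * hnorm h.
Definition continuous_H m n (g : prodsp m n -> prodsp m n) :=
  forall x eps, 0 < eps -> exists delta, 0 < delta /\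
    forall y, hnorm (hsub y x) < delta -> hnorm (hsub (g y) (g x)) < eps.

Definition prox_bounded m n (r : forall j : 'I_m, vec (n j) -> ereal) (lam_r : R) :=
  0 < lam_r /\
  forall (x : prodsp m n) lam, 0 < lam <= lam_r ->
    exists y, forall y',
      ele (eadd (rsum r y) (Some (/(2*lam) * (hnorm (hsub x y))^2)))
          (eadd (rsum r y') (Some (/(2*lam) * (hnorm (hsub x y'))^2))).

(** |{h : k - tau <= h <= k, j_h = j}| (h ranging over the iteration indices). *)
Definition cnt_idx m (jseq : nat -> 'I_m) (tau : nat) (j : 'I_m) (k : nat) : nat :=
  count (fun h => jseq h == j) (iota (k - tau) (k - (k - tau)).+1).
Definition is_rho_tau m (jseq : nat -> 'I_m) (tau rho : nat) : Prop :=
  (forall j k, is_true (leq (cnt_idx jseq tau j k) rho)) /\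
  (exists j k, cnt_idx jseq tau j k = rho).

(** Delayed iterate x^{k-d_k}; negative indices are truncated to 0 (x^i = x^0). *)
Definition xdel m n (x : nat -> prodsp m n) (d : nat -> 'I_m -> nat) (k : nat) : prodsp m n :=
  fun j => x (k - d k j)%nat j.

Definition gam m n (L : 'I_m -> prodsp m n -> R) (c M lam_r : R) (rho tau : nat)
  (x : nat -> prodsp m n) (d : nat -> 'I_m -> nat) (k : nat) (j : 'I_m) : R :=
  Rmin (c / (L j (xdel x d k) + 2 * M * sqrt (INR rho * INR tau))) lam_r.

Definition Phi m n (f : prodsp m n -> R) r (M : R) (rho tau : nat)
  (z : nat -> prodsp m n) : ereal :=
  eadd (Psi f r (z 0%nat))
    (Some (M * sqrt (INR rho) / (2 * sqrt (INR tau)) *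
       \big[Rplus/R0]_(1 <= h < tau.+1)
          (INR (tau - h + 1) * (hnorm (hsub (z h) (z h.-1)))^2))).
Definition zseq m n (x : nat -> prodsp m n) (k : nat) : nat -> prodsp m n :=
  fun h => x (k - h)%nat.

(* Main.v *)
Require Import Defs.
From mathcomp Require Import all_boot.
From Stdlib Require Import Reals.
From HB Require Import structures.
From mathcomp Require Import zify.
From Stdlib Require Import Lra Lia Psatz FunctionalExtensionality.
Open Scope R_scope.
Set Warnings "-notation-overridden,-redundant-canonical-projection".

Lemma Rplus_A : associative Rplus. Proof. intros a b c; ring. Qed.
HB.instance Definition _ := Monoid.isComLaw.Build R R0 Rplus Rplus_A Rplus_comm Rplus_0_l.

Section Sums.
Context {I : Type}.

Lemma sum_le (s : seq I) (P : pred I) (F G : I -> R) :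
  (forall i, P i -> F i <= G i) ->
  \big[Rplus/R0]_(i <- s | P i) F i <= \big[Rplus/R0]_(i <- s | P i) G i.
Proof.
move=> H; elim: s => [|a s IH]; rewrite ?big_nil ?big_cons; first lra.
case: (P a) (H a) => // Ha; have := Ha isT; lra.
Qed.

Lemma sum_ge0 (s : seq I) (P : pred I) (F : I -> R) :
  (forall i, P i -> 0 <= F i) -> 0 <= \big[Rplus/R0]_(i <- s | P i) F i.
Proof.
move=> H; elim: s => [|a s IH]; rewrite ?big_nil ?big_cons; first lra.
case: (P a) (H a) => // Ha; have := Ha isT; lra.
Qed.

Lemma sum_scal (s : seq I) (P : pred I) (F : I -> R) c :
  \big[Rplus/R0]_(i <- s | P i) (c * F i) = c * \big[Rplus/R0]_(i <- s | P i) F i.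
Proof.
elim: s => [|a s IH]; rewrite ?big_nil ?big_cons; first ring.
case: (P a); rewrite IH; ring.
Qed.

Lemma sum_add (s : seq I) (P : pred I) (F G : I -> R) :
  \big[Rplus/R0]_(i <- s | P i) (F i + G i) =
  \big[Rplus/R0]_(i <- s | P i) F i + \big[Rplus/R0]_(i <- s | P i) G i.
Proof.
elim: s => [|a s IH]; rewrite ?big_nil ?big_cons; first ring.
case: (P a); rewrite IH; ring.
Qed.

Lemma sum_sub (s : seq I) (P : pred I) (F G : I -> R) :
  \big[Rplus/R0]_(i <- s | P i) (F i - G i) =
  \big[Rplus/R0]_(i <- s | P i) F i - \big[Rplus/R0]_(i <- s | P i) G i.
Proof.
elim: s => [|a s IH]; rewrite ?big_nil ?big_cons; first ring.
case: (P a); rewrite IH; ring.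
Qed.

Lemma sum_filter0 (s : seq I) (P : pred I) (F : I -> R) :
  (forall i, ~~ P i -> F i = 0) ->
  \big[Rplus/R0]_(i <- s) F i = \big[Rplus/R0]_(i <- s | P i) F i.
Proof.
move=> H; elim: s => [|a s IH]; rewrite ?big_nil ?big_cons //.
case E: (P a); rewrite IH //. rewrite H ?E //; ring.
Qed.

Lemma sum_drop_filter (s : seq I) (P : pred I) (F : I -> R) :
  (forall i, 0 <= F i) ->
  \big[Rplus/R0]_(i <- s | P i) F i <= \big[Rplus/R0]_(i <- s) F i.
Proof.
move=> H; elim: s => [|a s IH]; rewrite ?big_nil ?big_cons; first lra.
case: (P a); have := H a; lra.
Qed.

Lemma sum_sq_count (s : seq I) (P : pred I) (g : I -> R) :
  (\big[Rplus/R0]_(i <- s | P i) g i)^2 <=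
  INR (count P s) * \big[Rplus/R0]_(i <- s | P i) (g i)^2.
Proof.
elim: s => [|a s IH]; rewrite ?big_nil ?big_cons; first (simpl; lra).
have Q0 : 0 <= \big[Rplus/R0]_(i <- s | P i) (g i)^2 by apply: sum_ge0 => i _; nra.
rewrite [count _ _]/=.
case: (P a); last by rewrite add0n.
set S := \big[Rplus/R0]_(i <- s | P i) g i in IH *.
set Q := \big[Rplus/R0]_(i <- s | P i) (g i)^2 in IH Q0 *.
change (true + count P s)%nat with (count P s).+1; rewrite S_INR.
idtac.
have n0 := pos_INR (count P s).
set n := INR (count P s) in IH n0 *.
have : 0 <= n * (n * (g a)^2 - 2 * g a * S + Q) by (have := pow2_ge_0 (n * g a - S); nra).
destruct (Req_dec n 0) as [Hn|Hn].
  rewrite Hn in IH *. move=> _. have : S = 0 by nra. move=> ->; nra.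
move=> H. have Hp : 0 < n by lra.
have : 0 <= n * (g a)^2 - 2 * g a * S + Q.
  apply: (Rmult_le_reg_l n); first lra. lra.
nra.
Qed.
End Sums.
Section V.
Lemma vinner_ge0 {d} (u : vec d) : 0 <= vinner u u.
Proof. apply: sum_ge0 => i _; nra. Qed.

Lemma vnorm_ge0 {d} (u : vec d) : 0 <= vnorm u.
Proof. apply: sqrt_pos. Qed.

Lemma vnorm_sq {d} (u : vec d) : vnorm u ^ 2 = vinner u u.
Proof. rewrite /vnorm -Rsqr_pow2 Rsqr_sqrt //; apply: vinner_ge0. Qed.

Lemma vinner_weighted {d} (u v : vec d) t : 0 < t ->
  vinner u v <= / (2 * t) * vinner u u + t / 2 * vinner v v.
Proof.
move=> Ht; rewrite /vinner -!sum_scal -sum_add; apply: sum_le => i _.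
have H : 0 <= / (2 * t) * (u i - t * v i)^2.
  apply: Rmult_le_pos; [apply: Rlt_le; apply: Rinv_0_lt_compat; lra | apply: pow2_ge_0].
have E : / (2 * t) * (u i - t * v i)^2 = / (2 * t) * (u i * u i) + t / 2 * (v i * v i) - u i * v i.
  field; lra.
lra.
Qed.

Lemma vinner_subl {d} (a b w : vec d) : vinner (vsub a b) w = vinner a w - vinner b w.
Proof. rewrite /vinner -sum_sub; apply: eq_bigr => i _; rewrite /vsub; ring. Qed.

Lemma vinner_scalr {d} (a w : vec d) h : vinner a (fun i => h * w i) = h * vinner a w.
Proof. rewrite /vinner -sum_scal; apply: eq_bigr => i _; ring. Qed.

Lemma vinner_scal2 {d} (w : vec d) h :
  vinner (fun i => h * w i) (fun i => h * w i) = h^2 * vinner w w.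
Proof. rewrite /vinner -sum_scal; apply: eq_bigr => i _; ring. Qed.

Lemma vnorm_scal {d} (w : vec d) h : vnorm (fun i => h * w i) = Rabs h * vnorm w.
Proof.
rewrite /vnorm vinner_scal2 sqrt_mult_alt; last by nra.
by rewrite -Rsqr_pow2 sqrt_Rsqr_abs.
Qed.

Lemma vinner_sym_sub {d} (a b : vec d) :
  vinner (vsub a b) (vsub a b) = vinner (vsub b a) (vsub b a).
Proof. apply: eq_bigr => i _; rewrite /vsub; ring. Qed.

Lemma vinner_0r {d} (a w : vec d) : (forall i, w i = 0) -> vinner a w = 0.
Proof. move=> H; rewrite /vinner big1 // => i _; rewrite H; ring. Qed.

Lemma vnorm_sub0 {d} (u : vec d) : vnorm (vsub u u) = 0.
Proof. rewrite /vnorm vinner_0r ?sqrt_0 // => i; rewrite /vsub; ring. Qed.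
End V.

Section H.
Context {m : nat} {n : 'I_m -> nat}.
Definition hzero : prodsp m n := fun j i => 0.

Lemma upd_eq (x : prodsp m n) j y : upd x j y j = y.
Proof.
rewrite /upd; case: eqP => // e.
by rewrite (eq_irrelevance e erefl).
Qed.

Lemma upd_neq (x : prodsp m n) j y j' : j' <> j -> upd x j y j' = x j'.
Proof. rewrite /upd; case: eqP => // e; by move=> /(_ (esym e)). Qed.

Lemma prodsp_ext (x y : prodsp m n) : (forall j i, x j i = y j i) -> x = y.
Proof.
move=> H; apply: functional_extensionality_dep => j.
by apply: functional_extensionality => i.
Qed.

Lemma upd_same (x : prodsp m n) j : upd x j (x j) = x.
Proof.
apply: functional_extensionality_dep => j'; case: (eqVneq j' j) => [->|/eqP ne].
  by rewrite upd_eq.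
by rewrite upd_neq.
Qed.

Lemma upd_add (y : prodsp m n) j a b :
  hadd (upd y j a) (upd hzero j b) = upd y j (fun i => a i + b i).
Proof.
apply: functional_extensionality_dep => j'; rewrite /hadd; case: (eqVneq j' j) => [->|/eqP ne].
  by rewrite !upd_eq.
rewrite !upd_neq //; apply: functional_extensionality => i; by rewrite /hzero Rplus_0_r.
Qed.

Lemma hinner_single (G h : prodsp m n) j :
  (forall j', j' != j -> forall i, h j' i = 0) -> hinner G h = vinner (G j) (h j).
Proof.
move=> H; rewrite /hinner (bigD1 j) //= big1 ?Rplus_0_r // => j' ne.
by apply: vinner_0r; apply: H.
Qed.

Lemma hinner_upd0 (G : prodsp m n) j b : hinner G (upd hzero j b) = vinner (G j) b.
Proof.
rewrite (@hinner_single _ _ j) ?upd_eq // => j' /eqP ne i.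
by rewrite upd_neq.
Qed.

Lemma hnorm_upd0 j b : hnorm (upd hzero j b) = vnorm b.
Proof. by rewrite /hnorm hinner_upd0 upd_eq. Qed.

Lemma hinner_ge0 (h : prodsp m n) : 0 <= hinner h h.
Proof. apply: sum_ge0 => j _; apply: vinner_ge0. Qed.

Lemma hnorm_sq (h : prodsp m n) : hnorm h ^ 2 = hinner h h.
Proof. rewrite /hnorm -Rsqr_pow2 Rsqr_sqrt //; apply: hinner_ge0. Qed.

Lemma hinner_sym_sub (a b : prodsp m n) :
  hinner (hsub a b) (hsub a b) = hinner (hsub b a) (hsub b a).
Proof. apply: eq_bigr => j _; apply: eq_bigr => i _; rewrite /hsub; ring. Qed.
End H.
Section Descent.
Context {m : nat} {n : 'I_m -> nat} (f : prodsp m n -> R) (gradf : prodsp m n -> prodsp m n).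

Lemma deriv_phi (Hg : has_gradient f gradf) (y : prodsp m n) j (v w : vec (n j)) t :
  derivable_pt_lim (fun t => f (upd y j (fun i => v i + t * w i))) t
    (vinner (gradf (upd y j (fun i => v i + t * w i)) j) w).
Proof.
move=> eps Heps.
set p := upd y j (fun i => v i + t * w i).
set Nw := vnorm w.
have Nw0 : 0 <= Nw by apply: vnorm_ge0.
have e0 : 0 < eps / (Nw + 1) by apply: Rdiv_lt_0_compat; lra.
case: (Hg p _ e0) => del [del0 Hdel].
have dpos : 0 < del / (Nw + 1) by apply: Rdiv_lt_0_compat; lra.
exists (mkposreal _ dpos) => h hne /= hlt.
have ha : 0 < Rabs h by apply: Rabs_pos_lt.
have Eup : upd y j (fun i => v i + (t + h) * w i) = hadd p (upd hzero j (fun i => h * w i)).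
  rewrite /p upd_add; congr upd; apply: functional_extensionality => i; ring.
rewrite Eup.
have Hn : hnorm (upd hzero j (fun i => h * w i)) = Rabs h * Nw by rewrite hnorm_upd0 vnorm_scal.
have Hb := Hdel (upd hzero j (fun i => h * w i)).
rewrite Hn hinner_upd0 vinner_scalr in Hb.
have Hlt : Rabs h * Nw < del.
  have : Rabs h * (Nw + 1) < del.
    have := Rmult_lt_compat_r (Nw + 1) _ _ ltac:(lra) hlt.
    rewrite /Rdiv Rmult_assoc Rinv_l; lra.
  nra.
have Hb' := Hb Hlt.
set A := f (hadd p _) - f p in Hb' *.
set l := vinner (gradf p j) w in Hb' *.
replace (A / h - l) with ((A - h * l) * / h) by (field; auto).
rewrite Rabs_mult Rabs_inv.
have -> : A - h * l = f (hadd p (upd hzero j (fun i => h * w i))) - f p - h * l by rewrite /A.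
apply: (Rle_lt_trans _ (eps / (Nw + 1) * (Rabs h * Nw) * / Rabs h)).
  apply: Rmult_le_compat_r; [apply: Rlt_le; apply: Rinv_0_lt_compat; lra| exact Hb'].
have -> : eps / (Nw + 1) * (Rabs h * Nw) * / Rabs h = eps * (Nw / (Nw + 1)) by field; lra.
have : Nw / (Nw + 1) < 1.
  apply: (Rmult_lt_reg_r (Nw + 1)); first lra.
  rewrite /Rdiv Rmult_assoc Rinv_l; lra.
nra.
Qed.

Lemma descent (Hg : has_gradient f gradf) (L : R) (y : prodsp m n) j (u v : vec (n j)) :
  0 < L ->
  (forall a b : vec (n j), vnorm (vsub (gradf (upd y j a) j) (gradf (upd y j b) j))
        <= L * vnorm (vsub a b)) ->
  f (upd y j u) <= f (upd y j v) + vinner (gradf (upd y j v) j) (vsub u v)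
                   + L / 2 * vnorm (vsub u v) ^ 2.
Proof.
move=> L0 HL.
set w := vsub u v.
set W := vnorm w ^ 2.
set p := fun t => upd y j (fun i => v i + t * w i).
set l0 := vinner (gradf (p 0) j) w.
pose psi := fun t => f (p t) - t * l0 - L / 2 * W * (t * t).
pose dpsi := fun t => vinner (gradf (p t) j) w - l0 - L / 2 * W * (2 * t).
have Hd : forall c, 0 <= c <= 1 -> derivable_pt_lim psi c (dpsi c).
  move=> c _.
  have H1 := deriv_phi Hg y j v w c.
  have H2 := derivable_pt_lim_scal id l0 c 1 (derivable_pt_lim_id c).
  have H3 := derivable_pt_lim_scal _ (L / 2 * W) c _
    (derivable_pt_lim_mult id id c 1 1 (derivable_pt_lim_id c) (derivable_pt_lim_id c)).
  have H := derivable_pt_lim_minus _ _ _ _ _ (derivable_pt_lim_minus _ _ _ _ _ H1 H2) H3.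
  set F := (X in derivable_pt_lim X _ _) in H.
  have Ef : psi = F.
    apply: functional_extensionality => t.
    rewrite /psi /F /minus_fct /mult_real_fct /mult_fct /id /p; ring.
  rewrite Ef; move: H; congr derivable_pt_lim.
  rewrite /dpsi /id /p; ring.
case: (MVT_cor2 psi dpsi 0 1 Rlt_0_1 Hd) => c [Ec Hc].
have Hneg : dpsi c <= 0.
  rewrite /dpsi /l0 -vinner_subl.
  set g := vsub _ _.
  have Lc : 0 < L * c by nra.
  have Hw := vinner_weighted g w (L * c) Lc.
  have Hg2 : vinner g g <= (L * c) ^ 2 * W.
    rewrite -vnorm_sq /W.
    have Hgn : vnorm g <= L * (c * vnorm w).
      have := HL (fun i => v i + c * w i) (fun i => v i + 0 * w i).
      have -> : vsub (fun i => v i + c * w i) (fun i => v i + 0 * w i) = (fun i => c * w i).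
        apply: functional_extensionality => i; rewrite /vsub; ring.
      rewrite vnorm_scal Rabs_pos_eq //; lra.
    have := vnorm_ge0 g; have := vnorm_ge0 w. nra.
  rewrite -(vnorm_sq w) -/W in Hw.
  have : / (2 * (L * c)) * vinner g g <= / (2 * (L * c)) * ((L * c) ^ 2 * W).
    apply: Rmult_le_compat_l => //; apply: Rlt_le; apply: Rinv_0_lt_compat; lra.
  have -> : / (2 * (L * c)) * ((L * c) ^ 2 * W) = L * c / 2 * W by field; lra.
  lra.
have : psi 1 <= psi 0 by nra.
rewrite /psi.
have -> : p 1 = upd y j u.
  rewrite /p; congr upd; apply: functional_extensionality => i; rewrite /w /vsub; ring.
have -> : p 0 = upd y j v.
  rewrite /p; congr upd; apply: functional_extensionality => i; ring.
rewrite /l0.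
have -> : p 0 = upd y j v.
  rewrite /p; congr upd; apply: functional_extensionality => i; ring.
rewrite /W; lra.
Qed.
End Descent.
Lemma count_window (Q : pred nat) k t :
  (count (fun h => (h <= k)%nat && Q (k - h)%nat) (iota 1 t) <=
   count Q (iota (k - t) (k - (k - t)).+1))%nat.
Proof.
elim: t => [|t IH]; first by [].
have -> : iota 1 t.+1 = iota 1 t ++ [:: t.+1] by rewrite -(addn1 t) iotaD add1n addn1.
rewrite count_cat /= addn0.
case: (leqP (t.+1) k) => Ht.
- have E1 : (k - t.+1 = (k - t).-1)%nat by lia.
  have E2 : (k - (k - t.+1) = (k - (k - t)).+1)%nat by lia.
  have E3 : ((k - t).-1.+1 = k - t)%nat by lia.
  rewrite E2 E1 /= E3.
  rewrite /= in IH; lia.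
- have E1 : (k - t.+1 = 0)%nat by lia.
  have E2 : (k - t = 0)%nat by lia.
  rewrite E1 /=; rewrite E2 /= in IH; lia.
Qed.

Section Delay.
Context {m : nat} {n : 'I_m -> nat} (x : nat -> prodsp m n) (jseq : nat -> 'I_m).
Hypothesis Hother : forall k j, j <> jseq k -> x k.+1 j = x k j.

Definition adiff k (j : 'I_m) h (i : 'I_(n j)) : R := x (k - h)%nat j i - x (k - h.-1)%nat j i.

Lemma telescope k j dd i :
  \big[Rplus/R0]_(h <- iota 1 dd) adiff k j h i = x (k - dd)%nat j i - x k j i.
Proof.
elim: dd => [|dd IH]; first by rewrite big_nil subn0; ring.
rewrite -(addn1 dd) iotaD big_cat /= big_cons big_nil IH /adiff.
have -> : (1 + dd).-1 = dd by lia.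
rewrite addn1 add1n; ring.
Qed.

Lemma adiff0 k j h i : ~~ ((h <= k)%nat && (jseq (k - h)%nat == j)) -> adiff k j h i = 0.
Proof.
rewrite /adiff => H.
case: (leqP h k) => Hh.
- case: h Hh H => [|h] Hh H; first by rewrite /= subn0; ring.
  have E : (k - h.+1.-1 = (k - h.+1).+1)%nat by rewrite /=; lia.
  rewrite E Hother; first ring.
  move=> Ej; move: H; by rewrite Hh Ej eqxx.
- have -> : (k - h = 0)%nat by lia.
  have -> : (k - h.-1 = 0)%nat by lia.
  ring.
Qed.

Lemma block_bound k (j : 'I_m) dd tau (rho : nat) :
  (dd <= tau)%nat ->
  (count (fun h => (h <= k)%nat && (jseq (k - h)%nat == j)) (iota 1 tau) <= rho)%nat ->
  vinner (fun i => x k j i - x (k - dd)%nat j i) (fun i => x k j i - x (k - dd)%nat j i)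
  <= INR rho * \big[Rplus/R0]_(h <- iota 1 tau) \big[Rplus/R0]_(i < n j) (adiff k j h i * adiff k j h i).
Proof.
move=> Hdd Hc.
set P := fun h => (h <= k)%nat && (jseq (k - h)%nat == j).
have Hcnt : (count P (iota 1 dd) <= rho)%nat.
  apply: leq_trans Hc.
  have -> : tau = (dd + (tau - dd))%nat by lia.
  by rewrite iotaD count_cat leq_addr.
rewrite /vinner.
apply: (Rle_trans _ (\big[Rplus/R0]_(i < n j)
          (INR (count P (iota 1 dd)) *
           \big[Rplus/R0]_(h <- iota 1 dd | P h) (adiff k j h i)^2))).
  apply: sum_le => i _.
  have -> : (x k j i - x (k - dd)%nat j i) * (x k j i - x (k - dd)%nat j i)
          = (\big[Rplus/R0]_(h <- iota 1 dd | P h) adiff k j h i)^2.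
    rewrite -(sum_filter0 _ P); last by move=> h; apply: adiff0.
    rewrite telescope; ring.
  apply: sum_sq_count.
rewrite sum_scal.
have Hr : INR (count P (iota 1 dd)) <= INR rho by apply: le_INR; apply/leP.
have S0 : 0 <= \big[Rplus/R0]_(i < n j) \big[Rplus/R0]_(h <- iota 1 dd | P h) adiff k j h i ^ 2.
  apply: sum_ge0 => i _; apply: sum_ge0 => h _; apply: pow2_ge_0.
apply: (Rle_trans _ (INR rho * \big[Rplus/R0]_(i < n j) \big[Rplus/R0]_(h <- iota 1 dd | P h) adiff k j h i ^ 2)).
  apply: Rmult_le_compat_r => //.
apply: Rmult_le_compat_l; first apply: pos_INR.
rewrite exchange_big /=.
apply: (Rle_trans _ (\big[Rplus/R0]_(h <- iota 1 dd) \big[Rplus/R0]_(i < n j) adiff k j h i ^ 2)).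
  apply: sum_drop_filter => h; apply: sum_ge0 => i _; apply: pow2_ge_0.
have -> : tau = (dd + (tau - dd))%nat by lia.
rewrite iotaD big_cat /=.
have : 0 <= \big[Rplus/R0]_(h <- iota (1 + dd) (tau - dd))
        \big[Rplus/R0]_(i < n j) (adiff k j h i * adiff k j h i).
  apply: sum_ge0 => h _; apply: sum_ge0 => i _; nra.
have -> : \big[Rplus/R0]_(h <- iota 1 dd) \big[Rplus/R0]_(i < n j) adiff k j h i ^ 2
        = \big[Rplus/R0]_(h <- iota 1 dd) \big[Rplus/R0]_(i < n j) (adiff k j h i * adiff k j h i).
  apply: eq_bigr => h _; apply: eq_bigr => i _; ring.
move=> ?; rewrite -[X in X <= _]Rplus_0_r; apply: Rplus_le_compat => //.
by apply: Req_le.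
Qed.
End Delay.
Section Lyap.
Context {m : nat} {n : 'I_m -> nat} (x : nat -> prodsp m n) (jseq : nat -> 'I_m).
Hypothesis Hother : forall k j, j <> jseq k -> x k.+1 j = x k j.

Definition Ek k h := hnorm (hsub (zseq x k h) (zseq x k h.-1)) ^ 2.

Lemma delay_bound k tau (rho : nat) (d : nat -> 'I_m -> nat) :
  (forall j, d k j <= tau)%nat ->
  (forall j, cnt_idx jseq tau j k <= rho)%nat ->
  hinner (hsub (x k) (xdel x d k)) (hsub (x k) (xdel x d k))
  <= INR rho * \big[Rplus/R0]_(1 <= h < tau.+1) Ek k h.
Proof.
move=> Hd Hr.
rewrite /hinner.
apply: (Rle_trans _ (\big[Rplus/R0]_(j < m) (INR rho *
   \big[Rplus/R0]_(h <- iota 1 tau) \big[Rplus/R0]_(i < n j) (adiff x k j h i * adiff x k j h i)))).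
  apply: sum_le => j _.
  have Hc : (count (fun h => (h <= k)%nat && (jseq (k - h)%nat == j)) (iota 1 tau) <= rho)%nat.
    apply: leq_trans (Hr j).
    exact: (count_window (fun i => jseq i == j) k tau).
  exact: (block_bound x jseq Hother k j (d k j) tau rho (Hd j) Hc).
rewrite sum_scal; apply: Rmult_le_compat_l; first apply: pos_INR.
rewrite exchange_big /index_iota subSS subn0.
apply: Req_le; apply: eq_bigr => h _.
rewrite /Ek hnorm_sq /hinner; apply: eq_bigr => j _; by [].
Qed.

Lemma Ek_shift k h : (1 <= h)%nat -> Ek k.+1 h.+1 = Ek k h.
Proof.
move=> Hh; rewrite /Ek /zseq subSS.
have -> : (k.+1 - h.+1.-1 = k - h.-1)%nat by rewrite /=; lia.
by [].
Qed.

Lemma S_shift k tau : (1 <= tau)%nat ->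
  \big[Rplus/R0]_(1 <= h < tau.+1) (INR (tau - h + 1) * Ek k.+1 h) =
  \big[Rplus/R0]_(1 <= h < tau.+1) (INR (tau - h + 1) * Ek k h)
  + INR tau * Ek k.+1 1 - \big[Rplus/R0]_(1 <= h < tau.+1) Ek k h.
Proof.
move=> Ht.
rewrite big_nat_recl // big_nat_recr // [X in _ = _ + _ - X]big_nat_recr //=.
have -> : (tau - 1 + 1 = tau)%nat by lia.
have -> : (tau - tau + 1 = 1)%nat by lia.
rewrite (@eq_big_nat _ _ _ 1 tau (fun i => INR (tau - i.+1 + 1) * Ek k.+1 i.+1)
           (fun i => INR (tau - i) * Ek k i)); last first.
  move=> i /andP [H1 H2]; rewrite Ek_shift //.
  by have -> : (tau - i.+1 + 1 = tau - i)%nat by lia.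
rewrite (@eq_big_nat _ _ _ 1 tau (fun i => INR (tau - i + 1) * Ek k i)
           (fun i => INR (tau - i) * Ek k i + Ek k i)); last first.
  move=> i /andP [H1 H2]; rewrite plus_INR /=; ring.
rewrite sum_add /=; ring.
Qed.

Lemma Ek1 k : Ek k.+1 1 = vnorm (vsub (x k.+1 (jseq k)) (x k (jseq k))) ^ 2.
Proof.
rewrite /Ek /zseq subSS subn0 subn0 hnorm_sq vnorm_sq.
rewrite (@hinner_single _ _ _ _ (jseq k)).
  exact: (vinner_sym_sub (x k (jseq k)) (x k.+1 (jseq k))).
move=> j' /eqP ne i; rewrite /hsub Hother //; ring.
Qed.
End Lyap.
Lemma eaddA : associative eadd.
Proof. by case=> [a|] [b|] [c|] //=; rewrite Rplus_assoc. Qed.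
Lemma eaddC : commutative eadd.
Proof. by case=> [a|] [b|] //=; rewrite Rplus_comm. Qed.
Lemma eadd0 : left_id (Some R0) eadd.
Proof. by case=> [a|] //=; rewrite Rplus_0_l. Qed.
HB.instance Definition _ := Monoid.isComLaw.Build ereal (Some R0) eadd eaddA eaddC eadd0.

Lemma rsum_split m (n : 'I_m -> nat) (r : forall j : 'I_m, vec (n j) -> ereal) (y : prodsp m n) j :
  rsum r y = eadd (r j (y j)) (\big[eadd/Some R0]_(j' < m | j' != j) r j' (y j')).
Proof. by rewrite /rsum (bigD1 j). Qed.

Lemma eadd_Some_0 (a : ereal) : eadd a (Some 0) = a.
Proof. by case: a => [a|] //=; rewrite Rplus_0_r. Qed.
Theorem mainTheorem4
  (m : nat) (n : 'I_m -> nat)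
  (f : prodsp m n -> R) (gradf : prodsp m n -> prodsp m n)
  (r : forall j : 'I_m, vec (n j) -> ereal) (lam_r : R)
  (L : 'I_m -> prodsp m n -> R)
  (tau : nat) (d : nat -> 'I_m -> nat)
  (c M : R) (jseq : nat -> 'I_m) (rho : nat)
  (x : nat -> prodsp m n)
  (* f is C^1 with gradient gradf *)
  (Hgrad : has_gradient f gradf) (Hcont : continuous_H gradf)
  (* each r_j is proper and lower semicontinuous *)
  (Hr_proper : forall j, proper_e (r j)) (Hr_lsc : forall j, lsc_e (r j))
  (* Psi = f + r bounded below *)
  (Hbdd : exists b : R, forall y, ele (Some b) (Psi f r y))
  (* r prox-bounded with threshold lam_r > 0 *)
  (Hprox : prox_bounded r lam_r)
  (* L_j : H_{-j} -> (0,oo), block-Lipschitz constant of grad_j f *)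
  (HLpos : forall j y, 0 < L j y)
  (HLind : forall j y (u : vec (n j)), L j (upd y j u) = L j y)
  (HLip : forall j y (u v : vec (n j)),
      vnorm (vsub (gradf (upd y j u) j) (gradf (upd y j v) j))
        <= L j y * vnorm (vsub u v))
  (* delays *)
  (Htau : is_true (leq 1 tau)) (Hd : forall k j, is_true (leq (d k j) tau))
  (* parameters *)
  (Hc : 0 < c < 1) (HM : 0 < M)
  (Hrho : is_rho_tau jseq tau rho)
  (* the Deterministic Asynchronous PALM iteration *)
  (Hstep : forall k (u : vec (n (jseq k))),
      ele (eadd (r (jseq k) (x k.+1 (jseq k)))
                (Some (vinner (gradf (xdel x d k) (jseq k))
                              (vsub (x k.+1 (jseq k)) (x k (jseq k)))
                       + / (2 * gam L c M lam_r rho tau x d k (jseq k))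
                         * (vnorm (vsub (x k.+1 (jseq k)) (x k (jseq k))))^2)))
          (eadd (r (jseq k) u)
                (Some (vinner (gradf (xdel x d k) (jseq k)) (vsub u (x k (jseq k)))
                       + / (2 * gam L c M lam_r rho tau x d k (jseq k))
                         * (vnorm (vsub u (x k (jseq k))))^2))))
  (Hother : forall k j, j <> jseq k -> x k.+1 j = x k j)
  (* (A3) *)
  (HA3 : forall k,
      vnorm (vsub (gradf (x k) (jseq k)) (gradf (xdel x d k) (jseq k)))
        <= M * hnorm (hsub (x k) (xdel x d k))) :
  (forall k : nat,
      ele (eadd (Phi f r M rho tau (zseq x k.+1))
                (Some (/ 2 * (/ gam L c M lam_r rho tau x d k (jseq k)
                              - L (jseq k) (x k)
                              - 2 * M * sqrt (INR rho * INR tau))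
                       * (vnorm (vsub (x k.+1 (jseq k)) (x k (jseq k))))^2)))
          (Phi f r M rho tau (zseq x k)))
  /\ (forall k : nat, ele (Psi f r (x k)) (Phi f r M rho tau (zseq x k)))
  /\ Phi f r M rho tau (zseq x 0%nat) = Psi f r (x 0%nat).
Proof.
Proof.
have lam0 : 0 < lam_r by case: Hprox.
have tau1 : 1 <= INR tau by apply: (le_INR 1); apply/leP.
have rho1 : (1 <= rho)%nat.
  case: Hrho => Hr _; apply: leq_trans (Hr (jseq 0%nat) 0%nat).
  by rewrite /cnt_idx sub0n /= eqxx.
have rho1R : 1 <= INR rho by apply: (le_INR 1); apply/leP.
set a := sqrt (INR rho).
set b := sqrt (INR tau).
have a0 : 0 < a by apply: sqrt_lt_R0; lra.
have b0 : 0 < b by apply: sqrt_lt_R0; lra.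
have aa : a * a = INR rho by apply: sqrt_sqrt; lra.
have bb : b * b = INR tau by apply: sqrt_sqrt; lra.
have Kab : sqrt (INR rho * INR tau) = a * b by apply: sqrt_mult; lra.
have Cnn : 0 <= M * a / (2 * b).
  apply: Rmult_le_pos; first nra. apply: Rlt_le; apply: Rinv_0_lt_compat; lra.
split; [|split].
3:{
  rewrite /Phi big1_seq ?Rmult_0_r ?eadd_Some_0 //.
  move=> h _; rewrite /zseq !sub0n /hnorm.
  rewrite (_ : hinner _ _ = 0) ?sqrt_0 /=; first ring.
  rewrite /hinner big1 // => j _; apply: vinner_0r => i; rewrite /hsub; ring.
}
2:{
  move=> k; rewrite /Phi (_ : zseq x k 0 = x k); last by rewrite /zseq subn0.
  have : 0 <= M * a / (2 * b) * \big[Rplus/R0]_(1 <= h < tau.+1)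
         (INR (tau - h + 1) * hnorm (hsub (zseq x k h) (zseq x k h.-1)) ^ 2).
    apply: Rmult_le_pos => //; apply: sum_ge0 => h _.
    apply: Rmult_le_pos; [apply: pos_INR | apply: pow2_ge_0].
  rewrite -/a -/b; move: (M * a / (2 * b) * _) => cc H.
  case: (Psi f r (x k)) => [p|] //=; lra.
}
move=> k.
set j := jseq k.
set g := gam L c M lam_r rho tau x d k j.
have g0 : 0 < g.
  rewrite /g /gam; apply: Rmin_pos => //.
  apply: Rdiv_lt_0_compat; first lra.
  have := HLpos j (xdel x d k); have := sqrt_pos (INR rho * INR tau); nra.
have Ex1 : upd (x k) j (x k.+1 j) = x k.+1.
  apply: functional_extensionality_dep => j'; case: (eqVneq j' j) => [->|/eqP ne].
    by rewrite upd_eq.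
  by rewrite upd_neq // Hother.
have HD := descent f gradf Hgrad (L j (x k)) (x k) j (x k.+1 j) (x k j) (HLpos _ _) (HLip j (x k)).
rewrite Ex1 upd_same in HD.
have HS := Hstep k (x k j).
rewrite -/j -/g vnorm_sub0 (vinner_0r _ (vsub (x k j) (x k j))) in HS; last by move=> i; rewrite /vsub; ring.
set D := vsub (x k.+1 j) (x k j) in HD HS *.
set gdel := gradf (xdel x d k) j in HS *.
set gk := gradf (x k) j in HD.
set K := M * (a * b).
have K0 : 0 < K by rewrite /K; apply: Rmult_lt_0_compat => //; apply: Rmult_lt_0_compat.
have HW := vinner_weighted (vsub gk gdel) D K K0.
rewrite vinner_subl -(vnorm_sq D) in HW.
have HA := HA3 k; rewrite -/j -/gk -/gdel in HA.
have HA2 : vinner (vsub gk gdel) (vsub gk gdel) <= M ^ 2 * hinner (hsub (x k) (xdel x d k)) (hsub (x k) (xdel x d k)).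
  rewrite -vnorm_sq -hnorm_sq.
  have := vnorm_ge0 (vsub gk gdel); nra.
have HB := delay_bound x jseq Hother k tau rho d (Hd k) (fun j => (proj1 Hrho) j k).
set SE := \big[Rplus/R0]_(1 <= h < tau.+1) Ek x k h in HB.
have SE0 : 0 <= SE by apply: sum_ge0 => h _; apply: pow2_ge_0.
have HC : / (2 * K) * vinner (vsub gk gdel) (vsub gk gdel) <= M * a / (2 * b) * SE.
  have iK : 0 < / (2 * K) by apply: Rinv_0_lt_compat; lra.
  apply: (Rle_trans _ (/ (2 * K) * (M ^ 2 * (INR rho * SE)))).
    apply: Rmult_le_compat_l; first lra.
    apply: (Rle_trans _ _ _ HA2); apply: Rmult_le_compat_l => //; nra.
  rewrite -aa /K; apply: Req_le; field; lra.
have HSS := S_shift x k tau Htau.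
rewrite (Ek1 x jseq Hother) -/j -/D -/SE /Ek in HSS.
rewrite /Phi /Psi (_ : zseq x k.+1 0 = x k.+1); last by rewrite /zseq subn0.
rewrite (_ : zseq x k 0 = x k); last by rewrite /zseq subn0.
rewrite (@rsum_split _ _ r (x k.+1) j) (@rsum_split _ _ r (x k) j).
rewrite (eq_bigr (fun j' => r j' (x k j'))); last first.
  move=> j' /eqP ne; by rewrite Hother.
rewrite -/a -/b HSS Kab.
move: HS; rewrite -/j.
case: (r j (x k.+1 j)) => [r1|]; case: (r j (x k j)) => [rk|]; 
  case: (\big[eadd/Some R0]_(j' < m | j' != j) r j' (x k j')) => [R|] //=.
move=> HS'.
rewrite -!/(Rsqr _) in HS' HD HW *.
set S0 := \big[Rplus/R0]_(1 <= h < tau.+1) _.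
set C := M * a / (2 * b) in HC *.
set Q := vnorm D * (vnorm D * 1) in HS' *.
have EQ : vnorm D ^ 2 = Q by rewrite /Q /=.
rewrite EQ in HD HW.
have HCt : C * INR tau = K / 2 by rewrite /C /K -bb; field; lra.
have E1 : C * (S0 + INR tau * Q - SE) = C * S0 + K / 2 * Q - C * SE by rewrite -HCt; ring.
have E2 : / 2 * (/ g - L j (x k) - 2 * M * (a * b)) * Q = / (2 * g) * Q - L j (x k) / 2 * Q - K * Q.
  rewrite /K; field; lra.
rewrite E1 E2.
lra.
Qed.
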